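(* Let $A>2$ be a fixed positive integer and let $(x_m)$ be defined by $x_0=0$, $x_1=1$, $x_{m+1}=Ax_m-x_{m-1}$. Let $n\ge3$ and consider the Markov chain on $\{0,1,\dots,n-1\}$ with $n\times n$ transition probability matrix $\mathbf P(A)=(P_{ij})$ given by: $P_{00}=1-\frac1A$, $P_{01}=\frac1A$; $P_{10}=1-\frac1A$, $P_{12}=\frac1A$; for $2\le i\le n-2$: $P_{i0}=1-\frac2A$, $P_{i,i-1}=\frac1A$, $P_{i,i+1}=\frac1A$; $P_{n-1,0}=1-\frac1A$, $P_{n-1,n-2}=\frac1A$; all other entries $0$. Then the steady state probability vector $\vec\pi=(\pi_0,\dots,\pi_{n-1})$ (the unique probability vector with $\vec\pi=\vec\pi\mathbf P(A)$) is given by $$\pi_i=\frac{x_{n-i}}{\sum_{l=1}^n x_l},\qquad i=0,1,\dots,n-1.$$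
   Context: The sequence $(x_m)$ defined by $x_0=0,x_1=1,x_{m+1}=Ax_m-x_{m-1}$ is called a balancing-like sequence; for $A=6$ it is the sequence of balancing numbers. *)

(* Defs.v *)
From HB Require Import structures.
From mathcomp Require Import all_boot all_order all_algebra.
Set Implicit Arguments. Unset Strict Implicit. Unset Printing Implicit Defensive.
Import Order.TTheory GRing.Theory Num.Theory.
Local Open Scope ring_scope.

(* Balancing-like sequence x_0 = 0, x_1 = 1, x_{m+1} = A x_m - x_{m-1},
   computed as pairs (x_m, x_{m+1}). *)
Fixpoint bl_pair (R : nzRingType) (A : R) (m : nat) : R * R :=
  match m with
  | 0%N => (0, 1)
  | m'.+1 => let p := bl_pair A m' in (p.2, A * p.2 - p.1)
  end.

Definition bl_seq (R : nzRingType) (A : R) (m : nat) : R := (bl_pair A m).1.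

Definition Pmat (R : fieldType) (A : R) (n : nat) : 'M[R]_n :=
  \matrix_(i < n, j < n)
    if (nat_of_ord i == 0)%N then
      (if (nat_of_ord j == 0)%N then 1 - A^-1
       else if (nat_of_ord j == 1)%N then A^-1 else 0)
    else if (nat_of_ord i == 1)%N then
      (if (nat_of_ord j == 0)%N then 1 - A^-1
       else if (nat_of_ord j == 2)%N then A^-1 else 0)
    else if (nat_of_ord i == n.-1)%N then
      (if (nat_of_ord j == 0)%N then 1 - A^-1
       else if (nat_of_ord j == n - 2)%N then A^-1 else 0)
    else
      (if (nat_of_ord j == 0)%N then 1 - 2 / A
       else if ((nat_of_ord j == (nat_of_ord i).-1) || (nat_of_ord j == (nat_of_ord i).+1))%N
            then A^-1 else 0).

Definition prob_vec (R : numDomainType) (n : nat) (p : 'rV[R]_n) : Prop :=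
  (forall i, 0 <= p ord0 i) /\ \sum_(i < n) p ord0 i = 1.

(* Main.v *)
Require Import Defs.
From HB Require Import structures.
From mathcomp Require Import all_boot all_order all_algebra.
From mathcomp Require Import zify ring lra.
Import Order.TTheory GRing.Theory Num.Theory.
Local Open Scope ring_scope.

Lemma Pent0 (R : fieldType) (a : R) n (i j : 'I_n) : (3 <= n)%N -> (j : nat) = 0%N ->
  Pmat a n i j = 1 - 2 / a + a^-1 * (((i : nat) == 0%N)%:R + ((i : nat) == 1%N)%:R + ((i : nat) == n.-1)%:R).
Proof.
move=> hn hj; rewrite mxE hj /=.
have := ltn_ord i.
move: (i : nat) => x hx.
repeat (case: eqP => //= ?); try lia.
all: rewrite ?addr0 ?add0r ?mulr0 ?mulr1; ring.
Qed.

Lemma sum_ind (R : nzRingType) n (F : nat -> R) a :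
  \sum_(i < n) F i * ((i : nat) == a)%:R = (a < n)%:R * F a.
Proof.
elim: n => [|n IH]; first by rewrite big_ord0 mul0r.
rewrite big_ord_recr /= IH.
case: (ltngtP a n) => h.
- have -> : (a < n.+1)%N by lia.
  by rewrite ?mulr0 ?addr0.
- have -> : (a < n.+1)%N = false by lia.
  by rewrite ?mulr0 ?addr0 ?mul0r.
- by subst; rewrite ?ltnn ?ltnSn ?eqxx ?mul0r ?add0r ?mulr1 ?mul1r.
Qed.

Lemma Pent (R : fieldType) (a : R) n (i j : 'I_n) : (3 <= n)%N -> (1 <= j)%N ->
  Pmat a n i j = a^-1 * (((i : nat) == j.-1)%:R + ((i : nat) == j.+1)%:R).
Proof.
move=> hn hj; rewrite mxE.
have := ltn_ord i; have := ltn_ord j.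
move: (i : nat) (j : nat) hj => x y hj hx hy.
repeat (case: eqP => //= ?); try lia.
all: by rewrite ?addr0 ?add0r ?mulr0 ?mulr1.
Qed.

Lemma blS (R : nzRingType) (a : R) m : bl_seq a m.+2 = a * bl_seq a m.+1 - bl_seq a m.
Proof. by []. Qed.

Lemma bl_pos (R : realFieldType) (a : R) : 3 <= a -> forall m,
  0 <= bl_seq a m /\ bl_seq a m < bl_seq a m.+1.
Proof.
move=> ha; elim => [|m [h1 h2]]; first by rewrite /bl_seq /= ltr01 lexx.
split; first lra.
rewrite blS; nra.
Qed.

Lemma sum_rev (R : nzRingType) (x : nat -> R) n :
  \sum_(1 <= l < n.+1) x l = \sum_(i < n) x (n - i)%N.
Proof.
rewrite big_add1 /= big_mkord (reindex_inj rev_ord_inj) /=.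
apply: eq_bigr => i _; congr x; have := ltn_ord i; lia.
Qed.

Section Main.
Variables (R : realFieldType) (a : R) (m : nat) (pi : 'rV[R]_m.+1).
Hypothesis hm : (2 <= m)%N.
Let n := m.+1.
Let g (k : nat) := pi ord0 (inord k).

Lemma pig (i : 'I_n) : pi ord0 i = g i.
Proof. by rewrite /g inord_val. Qed.

Lemma colj (j : 'I_n) : (1 <= j)%N ->
  (pi *m Pmat a n) ord0 j = a^-1 * (g j.-1 + (j.+1 < n)%:R * g j.+1).
Proof.
move=> hj; rewrite mxE.
under eq_bigr => i _ do rewrite Pent // pig mulrCA mulrDr.
rewrite -mulr_sumr big_split /= !sum_ind.
have -> : (j.-1 < n)%N by have := ltn_ord j; lia.
by rewrite mul1r.
Qed.

Lemma col0 (j : 'I_n) : (j : nat) = 0%N ->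
  (pi *m Pmat a n) ord0 j = (1 - 2 / a) * \sum_(i < n) g i + a^-1 * (g 0 + g 1 + g m).
Proof.
move=> hj; rewrite mxE.
under eq_bigr => i _ do rewrite Pent0 // pig mulrDr (mulrCA (g i)) !mulrDr.
rewrite big_split big_split big_split big_split /= -!mulr_sumr !sum_ind -!mulr_suml.
have h1 : (1 < m.+1)%N by lia.
rewrite h1 ltnSn /=; ring.
Qed.

End Main.

Theorem theorem5p1 (R : realFieldType) (A n : nat) (hA : (2 < A)%N) (hn : (3 <= n)%N)
  (pi : 'rV[R]_n) :
  (prob_vec pi /\ pi *m Pmat (A%:R : R) n = pi) <->
  (forall i : 'I_n,
     pi ord0 i = bl_seq (A%:R : R) (n - i) / \sum_(1 <= l < n.+1) bl_seq (A%:R : R) l).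
Proof.
set a : R := A%:R.
have ha : 3 <= a by rewrite /a ler_nat.
have a0 : a != 0 by apply/eqP => h; rewrite h in ha; lra.
set x := bl_seq a.
have xp : forall k, 0 <= x k /\ x k < x k.+1 := @bl_pos R a ha.
have xS : forall k, x k.+2 = a * x k.+1 - x k := fun k => @blS _ a k.
set S := \sum_(1 <= l < n.+1) x l.
have SE : S = \sum_(i < n) x (n - i)%N by rewrite /S sum_rev.
have Spos : 0 < S.
  rewrite /S big_nat_recr //=; last by lia.
  have s0 : 0 <= \sum_(1 <= i < n) x i by apply: sumr_ge0 => i _; have [] := xp i.
  have xn : 0 < x n by case: (n) hn => // k _; have [h1 h2] := xp k; lra.
  lra.
have S0 : S != 0 by apply/eqP => h; rewrite h in Spos; lra.
have SD : S = \sum_(1 <= l < n.+1) x l by [].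
case: n hn pi S SE Spos S0 SD => [//|m] hn pi S SE Spos S0 SD.
have hm : (2 <= m)%N by lia.
set g := fun k => pi ord0 (inord k).
have pg : forall i : 'I_m.+1, pi ord0 i = g i by move=> i; rewrite /g inord_val.
split.
- move=> [[hpos hsum] H].
  have eqj : forall j, (1 <= j)%N -> (j < m.+1)%N ->
      g j = a^-1 * (g j.-1 + (j.+1 < m.+1)%:R * g j.+1).
    move=> j h1 h2.
    have := congr1 (fun M : 'M[R]_(1, m.+1) => M ord0 (inord j)) H.
    rewrite colj ?inordK //= => <-.
  set c := g m.
  have claim : forall k, (1 <= k)%N -> (k < m.+1)%N ->
      g (m.+1 - k)%N = x k * c /\ g (m.+1 - k - 1)%N = x k.+1 * c.
    elim => [//|k IH] _ hk.
    case: (posnP k) => [->|kpos].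
      split; first by rewrite subn1 /x /bl_seq /= mul1r.
      have := eqj m ltac:(lia) ltac:(lia).
      rewrite ltnn mul0r addr0 -/c => hc.
      rewrite (_ : (m.+1 - 1 - 1 = m.-1)%N); last by lia.
      rewrite (_ : x 2%N = a); last by rewrite /x /bl_seq /=; ring.
      by rewrite hc mulrA mulfV // mul1r.
    have [IH1 IH2] := IH kpos ltac:(lia).
    split; first by rewrite (_ : (m.+1 - k.+1 = m.+1 - k - 1)%N) //; lia.
    have := eqj (m.+1 - k - 1)%N ltac:(lia) ltac:(lia).
    rewrite (_ : ((m.+1 - k - 1).+1 < m.+1)%N) ?mul1r; last by lia.
    rewrite (_ : ((m.+1 - k - 1).+1 = m.+1 - k)%N); last by lia.
    rewrite (_ : ((m.+1 - k - 1).-1 = m.+1 - k.+1 - 1)%N); last by lia.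
    rewrite IH1 IH2 xS => e.
    have : a * (x k.+1 * c) = g (m.+1 - k.+1 - 1)%N + x k * c.
      by rewrite e mulrA mulfV // mul1r.
    move=> e2; rewrite mulrBl -mulrA e2; ring.
  have gk : forall k, (k < m.+1)%N -> g k = x (m.+1 - k)%N * c.
    move=> k hk; case: (posnP k) => [->|kp].
      have [_ h] := claim m ltac:(lia) ltac:(lia).
      by rewrite (_ : (m.+1 - m - 1 = 0)%N) in h; [rewrite h subn0|lia].
    have [h _] := claim (m.+1 - k)%N ltac:(lia) ltac:(lia).
    by rewrite (_ : (m.+1 - (m.+1 - k) = k)%N) in h; [rewrite h|lia].
  have hc : c * S = 1.
    rewrite -hsum SE mulr_sumr; apply: eq_bigr => i _.
    by rewrite pg gk // mulrC.
  move=> i; rewrite pg gk //.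
  have -> : c = S^-1 by rewrite -[c]mulr1 -(mulfV S0) mulrA hc mul1r.
  done.
- move=> H.
  have gk : forall k, (k < m.+1)%N -> g k = x (m.+1 - k)%N / S.
    by move=> k hk; rewrite /g H inordK.
  have gk' : forall k, (k < m.+1)%N -> pi ord0 (inord k) = x (m.+1 - k)%N / S := gk.
  split; first split.
  + move=> i; rewrite H; apply: divr_ge0; first by have [] := xp (m.+1 - i)%N.
    exact: ltW.
  + rewrite -(mulfV S0) {1}SE mulr_suml; apply: eq_bigr => i _; exact: H.
  + apply/rowP => j.
    case: (posnP j) => [j0|jp].
    * rewrite col0 //.
      have -> : \sum_(i < m.+1) pi ord0 (inord i) = 1.
        rewrite -(mulfV S0) {1}SE mulr_suml; apply: eq_bigr => i _; exact: gk'.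
      have h1m : (1 < m.+1)%N by lia.
      rewrite (pg j) j0 gk // !gk' // subn0 subn1 /= (_ : (m.+1 - m = 1)%N); last by lia.
      have id : forall k, (a - 2) * \sum_(1 <= l < k.+1) x l = x k.+1 - x k - 1.
        elim => [|k IH]; first by rewrite big_geq // /x /bl_seq /=; ring.
        rewrite big_nat_recr //= mulrDr IH xS; ring.
      have e := id m.+1; rewrite -SD xS in e.
      rewrite (_ : x 1%N = 1) //.
      have e' : x m.+1 = (a - 2) * S + x m.+1 - (a - 2) * S by ring.
      rewrite e' {1}e.
      field; apply/andP; split => //.
    * rewrite colj // (pg j).
      have hjn := ltn_ord j.
      case: (ltnP j.+1 m.+1) => hj.
      -- rewrite mul1r !gk' ?gk; try lia.
         rewrite (_ : (m.+1 - j.-1 = (m.+1 - j.+1).+2)%N); last by lia.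
         rewrite (_ : (m.+1 - j = (m.+1 - j.+1).+1)%N); last by lia.
         rewrite xS; field; apply/andP; split => //.
      -- rewrite /= mul0r addr0 !gk' ?gk; try lia.
         have ej : (j : nat) = m by lia.
         rewrite ej (_ : (m.+1 - m.-1 = 2)%N); last by lia.
         rewrite (_ : (m.+1 - m = 1)%N); last by lia.
         rewrite /x /bl_seq /=.
         by field; rewrite ?a0 ?S0.
Qed.
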